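(* Let $K_1,\dots,K_n\subset\mathbb R^d$ be convex bodies such that $K:=K_1\cap\dots\cap K_n$ satisfies $\dim(K)<d$. Suppose $x\in K$ lies in the boundary of every $K_i$, $i=1,\dots,n$. Then there exist nonempty finite collections of closed half-spaces $\{H^+(i,j)\}_{j\in J_i}$, $i=1,\dots,n$, such that for all $i$ and $j\in J_i$ the boundary hyperplane of $H^+(i,j)$ is a supporting hyperplane of $K_i$ at $x$ (with $K_i\subset H^+(i,j)$), and $$\dim\Big(\bigcap_{j\in J_1}H^+(1,j)\cap\dots\cap\bigcap_{j\in J_n}H^+(n,j)\Big)<d.$$
   Context: A convex body is a nonempty compact convex subset of $\mathbb R^d$; the dimension of a convex set is the dimension of its affine hull. *)

(* Defs.v *)
From HB Require Import structures.
From mathcomp Require Import all_boot all_order all_algebra.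
From mathcomp Require Import all_classical all_reals all_analysis.
Set Implicit Arguments. Unset Strict Implicit. Unset Printing Implicit Defensive.
Import Order.TTheory GRing.Theory Num.Theory.
Import numFieldNormedType.Exports.
Local Open Scope classical_set_scope.
Local Open Scope ring_scope.

(* Euclidean space R^d is modelled as row vectors 'rV[R]_d (R : realType),
   with the product/normed topology of mathcomp-analysis. *)

Section Defs.
Variables (R : realType) (d : nat).
Local Notation V := 'rV[R]_d.

Definition dotp (u v : V) : R := (u *m v^T) 0 0.

Definition convex_set (A : set V) : Prop :=
  forall u v t, A u -> A v -> 0 <= t -> t <= 1 -> A (t *: u + (1 - t) *: v).

Definition convex_body (A : set V) : Prop :=
  A !=set0 /\ compact A /\ convex_set A.

Definition boundary (A : set V) : set V := closure A `\` A°.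

(* dimension of the affine hull of A: the dimension of the linear span of
   the difference vectors y - x (x, y in A); it is the largest dimension of
   the span of a finite family of such differences (bounded by d). *)
Definition diffs_of (A : set V) (s : seq V) : Prop :=
  forall v, v \in s -> exists x y, A x /\ A y /\ v = y - x.

Definition affdim (A : set V) : nat :=
  \big[maxn/0%N]_(k < d.+1 | `[< exists s, diffs_of A s /\ \dim (span s) = k >]) k.

Definition halfspace (h : V * R) : set V := [set y | dotp h.1 y <= h.2].

Definition supporting_halfspace (A : set V) (x : V) (h : V * R) : Prop :=
  h.1 != 0 /\ A `<=` halfspace h /\ dotp h.1 x = h.2.

End Defs.

(* Main.v *)
Require Import Defs.
From HB Require Import structures.
From mathcomp Require Import all_boot all_order all_algebra.
From mathcomp Require Import all_classical all_reals all_analysis.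
From mathcomp Require Import ring lra.
Import Order.TTheory GRing.Theory Num.Theory.
Import numFieldNormedType.Exports.
Local Open Scope classical_set_scope.
Local Open Scope ring_scope.
Set Implicit Arguments. Unset Strict Implicit. Unset Printing Implicit Defensive.

Section IP.
Variable R : realType.

Definition ip N (u v : 'rV[R]_N) : R := \sum_j u 0 j * v 0 j.

Lemma dotpE d (u v : 'rV[R]_d) : dotp u v = ip u v.
Proof. by rewrite /dotp /ip mxE; apply: eq_bigr => j _; rewrite mxE. Qed.

Lemma ipC N (u v : 'rV[R]_N) : ip u v = ip v u.
Proof. by apply: eq_bigr => j _; rewrite mulrC. Qed.

Lemma ipDl N (u v w : 'rV[R]_N) : ip (u + v) w = ip u w + ip v w.
Proof. by rewrite /ip -big_split; apply: eq_bigr => j _; rewrite mxE mulrDl. Qed.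

Lemma ipZl N a (u w : 'rV[R]_N) : ip (a *: u) w = a * ip u w.
Proof. by rewrite /ip mulr_sumr; apply: eq_bigr => j _; rewrite mxE mulrA. Qed.

Lemma ipNl N (u w : 'rV[R]_N) : ip (- u) w = - ip u w.
Proof. by rewrite -scaleN1r ipZl mulN1r. Qed.

Lemma ipBl N (u v w : 'rV[R]_N) : ip (u - v) w = ip u w - ip v w.
Proof. by rewrite ipDl ipNl. Qed.

Lemma ipDr N (u v w : 'rV[R]_N) : ip w (u + v) = ip w u + ip w v.
Proof. by rewrite ipC ipDl !(ipC w). Qed.
Lemma ipZr N a (u w : 'rV[R]_N) : ip w (a *: u) = a * ip w u.
Proof. by rewrite ipC ipZl ipC. Qed.
Lemma ipNr N (u w : 'rV[R]_N) : ip w (- u) = - ip w u.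
Proof. by rewrite ipC ipNl ipC. Qed.
Lemma ipBr N (u v w : 'rV[R]_N) : ip w (u - v) = ip w u - ip w v.
Proof. by rewrite ipDr ipNr. Qed.
Lemma ip0l N (w : 'rV[R]_N) : ip 0 w = 0.
Proof. by rewrite /ip big1 // => j _; rewrite mxE mul0r. Qed.
Lemma ip0r N (w : 'rV[R]_N) : ip w 0 = 0.
Proof. by rewrite ipC ip0l. Qed.

Lemma ip_ge0 N (u : 'rV[R]_N) : 0 <= ip u u.
Proof. by apply: sumr_ge0 => j _; rewrite -expr2 sqr_ge0. Qed.

Lemma ip_eq0 N (u : 'rV[R]_N) : ip u u = 0 -> u = 0.
Proof.
move=> /eqP; rewrite psumr_eq0 => [/allP H|j _]; last by rewrite -expr2 sqr_ge0.
apply/rowP => j; rewrite mxE; have := H j (mem_index_enum j).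
by rewrite -expr2 sqrf_eq0 => /eqP.
Qed.

Lemma coord_le_norm N (u : 'rV[R]_N) j : `|u 0 j| <= `|u|.
Proof.
rewrite [leRHS]/Num.norm /= mx_normrE.
by apply/bigmax_geP; right => /=; exists (0, j).
Qed.

Lemma ip_le N (u v : 'rV[R]_N) : `|ip u v| <= N%:R * (`|u| * `|v|).
Proof.
rewrite /ip (le_trans (ler_norm_sum _ _ _)) //.
rewrite -[N in N%:R]card_ord -sum1_card natr_sum mulr_suml.
apply: ler_sum => j _; rewrite mul1r normrM.
by apply: ler_pM => //; apply: coord_le_norm.
Qed.


Lemma mx_continuous (X : topologicalType) p q (f : X -> 'M[R]_(p,q)) :
  (forall i j, continuous (fun x => f x i j)) -> continuous f.
Proof.
move=> fc x A /= [P HP sPA].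
have : \forall y \near x, forall i j, P i j (f y i j).
  apply: filter_forall => i; apply: filter_forall => j.
  exact: (fc i j x (P i j) (HP i j)).
by apply: filterS => y Hy; apply: sPA.
Qed.

Lemma coordc (X : topologicalType) p q (g : X -> 'M[R]_(p,q)) i j :
  continuous g -> continuous (fun x => g x i j).
Proof.
move=> gc x; apply: (@continuous_comp _ _ _ g (fun M : 'M[R]_(p,q) => M i j)).
  exact: gc.
exact: coord_continuous.
Qed.

Lemma ipc (X : topologicalType) N (g h : X -> 'rV[R]_N) :
  continuous g -> continuous h -> continuous (fun x => ip (g x) (h x)).
Proof.
move=> gc hc; rewrite /ip.
apply: (@continuous_big _ _ +%R 0 xpredT _ _ (index_enum 'I_N)
   (fun j x => g x 0 j * h x 0 j)).
  exact: add_continuous.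
move=> j _ x; apply: continuousM; [exact: coordc | exact: coordc].
Qed.

Lemma ip_expand N (t : R) (w a : 'rV[R]_N) :
  ip (t *: w - a) (t *: w - a) = t * (t * ip w w) - 2 * t * ip a w + ip a a.
Proof. rewrite !ipBl !ipBr !ipZl !ipZr (ipC w a); ring. Qed.

Lemma separate N (C : set 'rV[R]_N) p : C !=set0 -> compact C ->
  Defs.convex_set C -> ~ C p -> exists a, forall y, C y -> ip a y < ip a p.
Proof.
move=> C0 cC convC Cp.
have fc : continuous (fun y : 'rV[R]_N => ip (y - p) (y - p)).
  by apply: ipc; move=> x; apply: continuousB; try exact: cvg_id; exact: cst_continuous.
have [c /set_mem Cc cmin] := compact_EVT_min C0 cC (continuous_subspaceT fc).
set a := p - c.
have a0 : a != 0 by rewrite subr_eq0; apply/eqP => pc; apply: Cp; rewrite pc.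
have aa : 0 < ip a a.
  by rewrite lt_def ip_ge0 andbT; apply/eqP => /ip_eq0 /eqP; apply/negP.
have key : forall y, C y -> ip a (y - c) <= 0.
  move=> y Cy; rewrite leNgt; apply/negP => dpos.
  set w := y - c; set dl := ip a w; set s := ip w w.
  have s0 : 0 <= s by apply: ip_ge0.
  set t := dl / (s + dl).
  have t0 : 0 < t by rewrite /t divr_gt0 // ltr_wpDl.
  have t1 : t <= 1 by rewrite /t ler_pdivrMr ?mul1r ?lerDr // ltr_wpDl.
  have ts : t * (s + dl) = dl by rewrite /t mulfVK // gt_eqF // ltr_wpDl.
  have Cz := convC y c t Cy Cc (ltW t0) t1.
  have := cmin _ (mem_set Cz).
  have -> : t *: y + (1 - t) *: c - p = t *: w - a.
    by rewrite /w /a scalerBr scalerBl scale1r opprB !addrA (addrAC (t *: y)).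
  have -> : c - p = - a by rewrite /a opprB.
  rewrite ipNl ipNr opprK ip_expand -/dl -/s.
  move=> H; have h1 : 0 < t * dl by exact: mulr_gt0 t0 dpos.
  have h2 : t * (t * s) = t * dl - t * (t * dl).
    by rewrite -mulrBr; congr (t * _); rewrite -{1}ts mulrDr addrK.
  have h3 : 0 <= t * (t * dl) by apply: mulr_ge0; exact: ltW.
  have h4 : 2 * t * dl = t * dl + t * dl by ring.
  lra.
exists a => y Cy; have := key y Cy; rewrite ipBr => H.
have -> : ip a p = ip a c + ip a a by rewrite -ipDr; congr (ip a _); rewrite /a addrC subrK.
lra.
Qed.

Lemma support N (C : set 'rV[R]_N) x : compact C -> Defs.convex_set C ->
  C x -> ~ nbhs x C -> exists2 a : 'rV[R]_N, a != 0 & forall y, C y -> ip a y <= ip a x.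
Proof.
move=> cC convC Cx nCx.
have C0 : C !=set0 by exists x.
pose b (k : nat) : R := (k.+1%:R)^-1.
have b0 k : 0 < b k by rewrite /b invr_gt0.
pose g k := \bigcap_(y in C) [set a : 'rV[R]_N | ip a (y - x) <= b k].
pose Sph := [set a : 'rV[R]_N | `|a| = 1].
have gE k a : g k a <-> (forall y, C y -> ip a y <= ip a x + b k).
  by split => H y Cy; have := H y Cy; rewrite /= ipBr; lra.
have Sne k : exists a, Sph a /\ g k a.
  pose e := b k / (N%:R + 1).
  have N1 : 0 < N%:R + 1 :> R by rewrite ltr_wpDl.
  have e0 : 0 < e by rewrite divr_gt0.
  have [p bxp Cp] : exists2 p, ball x e p & ~ C p.
    have : ~ (ball x e `<=` C) by move=> sub; apply: nCx; apply/nbhs_ballP; exists e.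
    by move=> /existsNP [p /not_implyP [bp Cp]]; exists p.
  have [a0 Ha0] := separate C0 cC convC Cp.
  have a00 : a0 != 0.
    by apply/eqP => a0E; have := Ha0 x Cx; rewrite a0E !ip0l ltxx.
  have na0 : 0 < `|a0| by rewrite normr_gt0.
  exists (`|a0|^-1 *: a0); split.
    by rewrite /Sph /= normrZ normfV normr_id mulVf // gt_eqF.
  apply/gE => y Cy; rewrite !ipZl.
  have h1 := Ha0 y Cy.
  have bxp' : `|p - x| < e by rewrite distrC; move: bxp; rewrite -ball_normE.
  have h2 : ip a0 p - ip a0 x <= N%:R * (`|a0| * e).
    rewrite -ipBr; apply: le_trans (ler_norm _) _; apply: le_trans (ip_le _ _) _.
    by apply: ler_wpM2l => //; apply: ler_wpM2l => //; apply: ltW.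
  have h3 : `|a0|^-1 * ip a0 y <= `|a0|^-1 * ip a0 p.
    by rewrite ler_pM2l ?invr_gt0 // ltW.
  have h4 : `|a0|^-1 * ip a0 p - `|a0|^-1 * ip a0 x <= N%:R * e.
    rewrite -mulrBr -(ler_pM2l na0) mulrA mulfV ?gt_eqF // mul1r mulrCA //.
  have h5 : N%:R * e <= b k.
    rewrite /e mulrA ler_pdivrMr // mulrDr mulr1 mulrC lerDl; exact: ltW.
  lra.
have cSph : compact Sph.
  apply: bounded_closed_compact.
    by exists 1; split; [exact: num_real | move=> M M1 a /= ->; exact: ltW].
  apply: (@preimage_closed _ _ (fun a : 'rV[R]_N => `|a|) (eq^~ 1)); last exact: closed_eq.
  by move=> ? _; exact: norm_continuous.
have := cSph; rewrite compact_In0 => /(_ nat setT (fun k => Sph `&` g k)).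
case.
- exists g => // k _; apply: closed_bigI => y Cy.
  apply: (@preimage_closed _ _ (fun a => ip a (y - x)) [set r | r <= b k]); last exact: closed_le.
  move=> ? _; apply: (@ipc _ _ id (fun=> y - x)) => ?; [exact: cvg_id | exact: cst_continuous].
- move=> D' _; set k := \max_(i <- finmap.enum_fset D') i.
  have [a [Sa ga]] := Sne k.
  exists a => i /= iD'; split => //; apply/gE => y Cy.
  have := proj1 (gE k a) ga y Cy.
  have : b k <= b i.
    by rewrite /b lef_pV2 ?posrE // ler_nat ltnS; rewrite /k; apply: leq_bigmax_seq.
  lra.
- move=> a Ha; exists a.
    have [Sa _] := Ha 0%N I.
    by apply/eqP => a0; move: Sa; rewrite /Sph /= a0 normr0 => /eqP; rewrite eq_sym oner_eq0.
  move=> y Cy; rewrite leNgt; apply/negP => lt.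
  have [k hk] := ltr_add_invr lt.
  have [_ gk] := Ha k I.
  have := proj1 (gE k a) gk y Cy; move=> h; by have := lt_le_trans hk h; rewrite ltxx.
Qed.

Lemma norm_le_coord N (u : 'rV[R]_N) M : 0 <= M ->
  (forall j, `|u 0 j| <= M) -> `|u| <= M.
Proof.
move=> M0 H; rewrite [leLHS]/Num.norm /= mx_normrE.
elim/big_ind: _ => //; first by move=> x y hx hy; rewrite ge_max hx hy.
by case=> i j _; rewrite (ord1 i); exact: H.
Qed.

Lemma avg_in N (C : set 'rV[R]_N) m (f : 'I_m.+1 -> 'rV[R]_N) :
  Defs.convex_set C -> (forall k, C (f k)) ->
  C ((m.+1%:R)^-1 *: \sum_k f k).
Proof.
move=> cvx; elim: m f => [|m IH] f Hf.
  by rewrite big_ord1 invr1 scale1r.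
rewrite big_ord_recr /=.
set S := \sum_(i < m.+1) _.
have HS := IH (fun i => f (widen_ord (leqnSn m.+1) i)) (fun i => Hf _).
have m2 : (m.+2%:R : R) = m.+1%:R + 1 by rewrite -natr1.
have m10 : (0 : R) < m.+1%:R by rewrite ltr0n.
have m20 : (m.+1%:R + 1 : R) != 0 by rewrite gt_eqF // ltr_wpDr.
set t := (m.+1%:R : R) / m.+2%:R.
have t0 : 0 <= t by rewrite /t divr_ge0.
have t1 : t <= 1 by rewrite /t ler_pdivrMr ?mul1r ?ler_nat // ltr0n.
have := cvx _ _ t HS (Hf ord_max) t0 t1.
suff -> : m.+2%:R^-1 *: (S + f ord_max) =
          t *: (m.+1%:R^-1 *: S) + (1 - t) *: f ord_max by [].
have a1 : (0:R) < 1 + m%:R by have := ler0n R m; lra.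
have a2 : (0:R) < 1 + m%:R + 1 by have := ler0n R m; lra.
rewrite scalerA scalerDr; congr (_ *: _ + _ *: _); rewrite /t m2; field.
  by rewrite !gt_eqF.
by rewrite gt_eqF.
Qed.

Lemma full_of_diff d (C : set 'rV[R]_d) e : Defs.convex_set C -> 0 < e ->
  (forall u : 'rV[R]_d, `|u| < e -> exists y y', [/\ C y, C y' & u = y - y']) ->
  exists c r, 0 < r /\ forall w, `|w - c| < r -> C w.
Proof.
move=> cvx e0 H.
case: d C cvx H => [|d] C cvx H.
  have [|y [y' [Cy _ _]]] := H 0; first by rewrite normr0.
  exists y, 1; split => // w _; suff -> : w = y by [].
  by apply/rowP => -[].
pose D : R := d.+1%:R.
have D0 : 0 < D by rewrite ltr0n.
have Dn : (1 + d%:R : R) != 0 by apply/eqP => h; have h' := ler0n R d; lra.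
have e2 : 0 < e / 2 by rewrite divr_gt0.
have ne k : `|'e_k : 'rV[R]_d.+1| <= 1.
  by apply: norm_le_coord => // j; rewrite mxE; case: (_ && _); rewrite ?normr1 ?normr0.
have /choice [pq Hpq] : forall k : 'I_d.+1, exists pq : 'rV[R]_d.+1 * 'rV[R]_d.+1,
    [/\ C pq.1, C pq.2 & (e/2) *: 'e_k = pq.1 - pq.2].
  move=> k; have [|y [y' [Cy Cy' E]]] := H ((e/2) *: 'e_k).
    rewrite normrZ (gtr0_norm e2); have := @ne k.
    have : e / 2 < e by rewrite ltr_pdivrMr // ltr_pMr // ltr1n.
    by move=> h1 h2; apply: le_lt_trans h1; rewrite ler_piMr // ltW.
  by exists (y, y').
pose p k := (pq k).1. pose q k := (pq k).2.
have Cp k : C (p k) by case: (Hpq k).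
have Cq k : C (q k) by case: (Hpq k).
have Epq k j : p k 0 j - q k 0 j = e / 2 * ('e_k : 'rV[R]_d.+1) 0 j.
  by case: (Hpq k) => _ _ E; have := congr1 (fun M : 'rV[R]_d.+1 => M 0 j) E; rewrite !mxE => ->.
pose mm k := 2^-1 *: p k + (1 - 2^-1) *: q k.
have Cm k : C (mm k).
  apply: cvx; [exact: Cp | exact: Cq | | ]; first by rewrite invr_ge0 ler0n.
  by rewrite invf_le1 ?ler1n // ltr0n.
pose c := D^-1 *: \sum_k mm k.
pose rho := e / (4 * D).
have rho0 : 0 < rho by rewrite divr_gt0 // mulr_gt0 // ltr0n.
have Cpm : forall k (s : bool), C (c + (if s then rho else - rho) *: 'e_k).
  move=> k s.
  pose F l := if l == k then (if s then p k else q k) else mm l.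
  have := @avg_in _ C d F cvx.
  have hsum : \sum_l F l = \sum_l mm l + (F k - mm k).
    rewrite (bigD1 k) //= [in RHS](bigD1 k) //=.
    rewrite (eq_bigr mm); last by move=> l /negPf lk; rewrite /F lk.
    by rewrite [RHS]addrC addrA subrK.
  have Fk : F k = if s then p k else q k by rewrite /F eqxx.
  have key : D^-1 *: (F k - mm k) = (if s then rho else - rho) *: 'e_k.
    apply/rowP => j; have E' : p k 0 j - q k 0 j = e / 2 * ('e_k : 'rV[R]_d.+1) 0 j by apply: Epq.
    rewrite Fk /mm.
    move: E'; rewrite !mxE => E'.
    have pE : p k 0 j = (p k 0 j - q k 0 j) + q k 0 j by ring.
    rewrite E' in pE.
    by case: (s); rewrite ?mxE ?pE /rho; field; rewrite gt_eqF.
  rewrite hsum scalerDr -/D -/c key.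
  by apply=> l; rewrite /F; case: eqP => _ //; case: (s).
exists c, (rho / D); split; first by rewrite divr_gt0.
move=> w Hw.
pose sk k := D * (w - c) 0 k.
have skb k : -rho <= sk k <= rho.
  rewrite -ler_norml /sk normrM (gtr0_norm D0).
  rewrite -ler_pdivlMl // mulrC; apply: le_trans (ltW Hw).
  exact: coord_le_norm.
pose g k := c + sk k *: 'e_k.
have Cg k : C (g k).
  pose t := (rho + sk k) / (2 * rho).
  have r2 : 0 < 2 * rho by rewrite mulr_gt0.
  have /andP [h1 h2] := @skb k.
  have t0 : 0 <= t by apply: divr_ge0; [lra | exact: ltW].
  have t1 : t <= 1 by rewrite /t ler_pdivrMr // mul1r; lra.
  have := cvx _ _ t (Cpm k true) (Cpm k false) t0 t1.
  suff -> : t *: (c + rho *: 'e_k) + (1 - t) *: (c + - rho *: 'e_k) = g k by [].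
  apply/rowP => j; rewrite !mxE /t; field.
  by rewrite Dn gt_eqF.
have := @avg_in _ C d g cvx (fun k => @Cg k).
suff -> : d.+1%:R^-1 *: \sum_k g k = w by [].
have -> : \sum_k g k = D *: c + D *: (w - c).
  rewrite big_split /= sumr_const card_ord -scaler_nat; congr (_ + _).
  rewrite [in RHS](row_sum_delta (w - c)) scaler_sumr.
  by apply: eq_bigr => k _; rewrite /sk scalerA.
by rewrite -scalerDr addrC subrK scalerA mulVf ?gt_eqF // scale1r.
Qed.

Lemma dim_full d : \dim (fullv : {vspace 'rV[R]_d}) = d.
Proof. by rewrite dimvf /dim /= mul1n. Qed.

Lemma ball_affdim d (A : set 'rV[R]_d) c r : 0 < r ->
  (forall w, `|w - c| < r -> A w) -> (d <= affdim A)%N.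
Proof.
move=> r0 H.
pose s := [seq (r / 2) *: ('e_k : 'rV[R]_d) | k <- enum 'I_d].
have r2 : 0 < r / 2 by rewrite divr_gt0.
have Hs : diffs_of A s.
  move=> v /mapP [k _ ->]; exists c, (c + (r / 2) *: ('e_k : 'rV[R]_d)); split; [|split].
  - by apply: (H c); rewrite subrr normr0.
  - apply: H; rewrite addrC addKr normrZ (gtr0_norm r2).
    have : `|'e_k : 'rV[R]_d| <= 1.
      by apply: norm_le_coord => // j; rewrite mxE; case: (_ && _); rewrite ?normr1 ?normr0.
    have : r / 2 < r by rewrite ltr_pdivrMr // ltr_pMr // ltr1n.
    by move=> h1 h2; apply: le_lt_trans h1; rewrite ler_piMr // ltW.
  - by rewrite addrC addKr.
have sf : span s = fullv.
  apply/eqP; rewrite eqEdim subvf dim_full /=.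
  suff -> : span s = fullv by rewrite dim_full.
  apply/vspaceP => v; rewrite memvf; rewrite [v]row_sum_delta.
  apply: memv_suml => k _.
  have -> : v 0 k *: ('e_k : 'rV[R]_d) = (v 0 k / (r / 2)) *: ((r / 2) *: 'e_k).
    by rewrite scalerA mulfVK // gt_eqF.
  by apply: memvZ; apply: memv_span; apply: map_f; rewrite mem_enum.
rewrite /affdim.
have := @leq_bigmax_cond _ (fun k : 'I_d.+1 => `[< exists s, diffs_of A s /\ \dim (span s) = k >]) (fun k => nat_of_ord k) ord_max.
apply; apply/asboolP; exists s; split => //; by rewrite sf dim_full.
Qed.

Lemma ipSr N n (a : 'rV[R]_N) (F : 'I_n -> 'rV[R]_N) :
  ip a (\sum_i F i) = \sum_i ip a (F i).
Proof. exact: (big_morph _ (fun u v => ipDr u v a) (ip0r a)). Qed.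

Lemma hyper_affdim d (A : set 'rV[R]_d) a b0 : a != 0 ->
  (forall y, A y -> ip a y = b0) -> (affdim A < d)%N.
Proof.
move=> a0 H.
case: d A a a0 H => [|d] A a a0 H.
  have a00 : a = 0 by apply/rowP => -[].
  by rewrite a00 eqxx in a0.
rewrite ltnS /affdim; apply/bigmax_leqP => k /asboolP [s [Hs dk]].
have := ltn_ord k; rewrite ltnS leq_eqVlt => /orP [/eqP kd|]; last by [].
exfalso.
have sf : span s = fullv.
  apply/eqP; rewrite eqEdim subvf dk kd dim_full /=.
  by [].
have ortho : forall v, v \in span s -> ip a v = 0.
  move=> v vs; rewrite (@coord_span _ _ _ (in_tuple s) v vs) ipSr big1 // => i _.
  rewrite ipZr; have : (in_tuple s)`_i \in s by rewrite mem_nth.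
  move=> /Hs [x [y [Ax [Ay ->]]]]; by rewrite ipBr (H _ Ax) (H _ Ay) subrr mulr0.
have := ortho a; rewrite sf memvf => /(_ isT) /ip_eq0 /eqP.
by rewrite (negbTE a0).
Qed.

Definition blk n d (i : 'I_n) (Y : 'rV[R]_(n * d)) : 'rV[R]_d := row i (vec_mx Y).
Definition pack n d (f : 'I_n -> 'rV[R]_d) : 'rV[R]_(n * d) :=
  mxvec (\matrix_(i, j) f i 0 j).

Lemma blk_coord n d i (Y : 'rV[R]_(n * d)) j : blk i Y 0 j = Y 0 (mxvec_index i j).
Proof. by rewrite !mxE. Qed.

Lemma blk_pack n d (f : 'I_n -> 'rV[R]_d) i : blk i (pack f) = f i.
Proof. by apply/rowP => j; rewrite blk_coord mxvecE mxE. Qed.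

Lemma blk_inj n d (Y Z : 'rV[R]_(n * d)) : (forall i, blk i Y = blk i Z) -> Y = Z.
Proof.
move=> H; apply/rowP => k; case/mxvec_indexP: k => i j.
by rewrite -!blk_coord H.
Qed.

Lemma blkD n d i (Y Z : 'rV[R]_(n * d)) : blk i (Y + Z) = blk i Y + blk i Z.
Proof. by apply/rowP => j; rewrite !blk_coord !mxE. Qed.
Lemma blkZ n d i a (Y : 'rV[R]_(n * d)) : blk i (a *: Y) = a *: blk i Y.
Proof. by apply/rowP => j; rewrite !blk_coord !mxE. Qed.
Lemma blkN n d i (Y : 'rV[R]_(n * d)) : blk i (- Y) = - blk i Y.
Proof. by apply/rowP => j; rewrite !blk_coord !mxE. Qed.
Lemma blkB n d i (Y Z : 'rV[R]_(n * d)) : blk i (Y - Z) = blk i Y - blk i Z.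
Proof. by rewrite blkD blkN. Qed.
Lemma blk0 n d i : blk i (0 : 'rV[R]_(n * d)) = 0.
Proof. by apply/rowP => j; rewrite !blk_coord !mxE. Qed.

Lemma ip_blk n d (Y Z : 'rV[R]_(n * d)) : ip Y Z = \sum_i ip (blk i Y) (blk i Z).
Proof.
rewrite /ip (reindex (fun p : 'I_n * 'I_d => mxvec_index p.1 p.2)) /=.
  rewrite -(pair_bigA _ (fun i j => Y 0 (mxvec_index i j) * Z 0 (mxvec_index i j))).
  by apply: eq_bigr => i _; apply: eq_bigr => j _; rewrite !blk_coord.
exists (fun k => enum_val (cast_ord (esym (mxvec_cast n d)) k)) => [[i j] _ | k _] /=.
  by rewrite /mxvec_index cast_ordK enum_rankK.
by case/mxvec_indexP: k => i j /=; rewrite /mxvec_index cast_ordK enum_rankK.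
Qed.

Lemma ip_row_mx p q (A1 B1 : 'rV[R]_p) (A2 B2 : 'rV[R]_q) :
  ip (row_mx A1 A2) (row_mx B1 B2) = ip A1 B1 + ip A2 B2.
Proof.
by rewrite /ip big_split_ord /=; congr (_ + _); apply: eq_bigr => j _;
  rewrite ?row_mxEl ?row_mxEr.
Qed.

Lemma mx_coord_cont (X : topologicalType) N (f : X -> 'rV[R]_N) :
  (forall j, continuous (fun x => f x 0 j)) -> continuous f.
Proof. by move=> H; apply: mx_continuous => i j; rewrite (ord1 i). Qed.

Lemma blk_cont (X : topologicalType) n d i (g : X -> 'rV[R]_(n * d)) :
  continuous g -> continuous (fun x => blk i (g x)).
Proof.
move=> gc; apply: mx_coord_cont => j.
have -> : (fun x => blk i (g x) 0 j) = fun x => g x 0 (mxvec_index i j).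
  by apply: funext => x; rewrite blk_coord.
exact: coordc.
Qed.

Lemma pack_cont (X : topologicalType) n d (g : X -> 'rV[R]_d) :
  continuous g -> continuous (fun x => pack (fun _ : 'I_n => g x)).
Proof.
move=> gc; apply: mx_coord_cont => k; case/mxvec_indexP: k => i j.
have -> : (fun x => pack (fun _ : 'I_n => g x) 0 (mxvec_index i j)) = fun x => g x 0 j.
  by apply: funext => x; rewrite mxvecE mxE.
exact: coordc.
Qed.

Lemma row_mx_cont (X : topologicalType) p q (f : X -> 'rV[R]_p) (g : X -> 'rV[R]_q) :
  continuous f -> continuous g -> continuous (fun x => row_mx (f x) (g x)).
Proof.
move=> fc gc; apply: mx_coord_cont => j.
case E : (fintype.split j) => [k|k].
  have -> : (fun x => row_mx (f x) (g x) 0 j) = fun x => f x 0 k.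
    by apply: funext => x; rewrite mxE E.
  exact: coordc.
have -> : (fun x => row_mx (f x) (g x) 0 j) = fun x => g x 0 k.
  by apply: funext => x; rewrite mxE E.
exact: coordc.
Qed.

Lemma norm_row_mx_le p q (A : 'rV[R]_p) (B : 'rV[R]_q) M :
  `|A| <= M -> `|B| <= M -> `|row_mx A B| <= M.
Proof.
move=> hA hB; apply: norm_le_coord; first exact: le_trans (normr_ge0 _) hA.
move=> j; rewrite mxE; case: (fintype.split j) => k.
  exact: le_trans (coord_le_norm _ _) hA.
exact: le_trans (coord_le_norm _ _) hB.
Qed.

Lemma norm_pack_le n d (f : 'I_n -> 'rV[R]_d) M : 0 <= M ->
  (forall l, `|f l| <= M) -> `|pack f| <= M.
Proof.
move=> M0 H; apply: norm_le_coord => // k; case/mxvec_indexP: k => i j.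
by rewrite mxvecE mxE; apply: le_trans (coord_le_norm _ _) (H i).
Qed.

Lemma ipSl N n (v : 'rV[R]_N) (F : 'I_n -> 'rV[R]_N) :
  ip (\sum_i F i) v = \sum_i ip (F i) v.
Proof. by rewrite ipC ipSr; apply: eq_bigr => i _; rewrite ipC. Qed.

End IP.

Unset Implicit Arguments.
Section Main.
Variable R : realType.
Variables (d m : nat) (K : 'I_m.+1 -> set 'rV[R]_d) (x : 'rV[R]_d).
Hypotheses (hcK : forall i, compact (K i)) (hvK : forall i, Defs.convex_set (K i))
  (hKx : forall i, K i x).

Local Notation n := m.+1.
Local Notation P := 'rV[R]_(n * d).
Local Notation V := 'rV[R]_d.

Definition Kp := [set Y : P | forall i, K i (blk i Y)].
Definition Dom := Kp `*` (Kp `*` K ord0).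
Definition L (z : P * (P * V)) : 'rV[R]_(n * d + n * d) :=
  row_mx (z.1 - z.2.1) (z.1 - pack (fun _ : 'I_n => z.2.2)).
Definition Dset := L @` Dom.

Lemma closedK i : closed (K i).
Proof. by apply: compact_closed; [exact: norm_hausdorff | exact: hcK]. Qed.

Lemma Kp_compact : compact Kp.
Proof.
apply: bounded_closed_compact.
  have : \forall M \near +oo, forall i, K i `<=` [set y : V | `|y| <= M].
    apply: filter_forall => i.
    exact: (@compact_bounded R V (K i) (hcK i)).
  apply: filterS => M HM Y KY /=.
  have M0 : 0 <= M by apply: le_trans (normr_ge0 _) (HM ord0 _ (KY ord0)).
  apply: norm_le_coord => // k; case/mxvec_indexP: k => i j.
  by rewrite -blk_coord; apply: le_trans (coord_le_norm _ _) (HM i _ (KY i)).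
have -> : Kp = \bigcap_(i in [set: 'I_n]) ((fun Y : P => blk i Y) @^-1` K i).
  by apply/seteqP; split => Y /= H i; [move=> _; exact: H | exact: H].
apply: closed_bigI => i _; apply: preimage_closed; last exact: closedK.
move=> Y _; apply: (@blk_cont _ P n d i id) => ?; exact: cvg_id.
Qed.

Lemma L_cont : continuous L.
Proof.
apply: row_mx_cont.
  move=> z; apply: continuousB; first exact: cvg_fst.
  apply: (@continuous_comp _ _ _ snd fst); [exact: cvg_snd | exact: cvg_fst].
move=> z; apply: continuousB; first exact: cvg_fst.
apply: (@pack_cont _ _ n d (fun z : P * (P * V) => z.2.2)) => w.
apply: (@continuous_comp _ _ _ snd snd); exact: cvg_snd.
Qed.

Lemma Dset_compact : compact Dset.
Proof.
apply: continuous_compact; first exact: continuous_subspaceT L_cont.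
by apply: compact_setX; [exact: Kp_compact | apply: compact_setX; [exact: Kp_compact | exact: hcK]].
Qed.

Lemma Kp_convex : Defs.convex_set Kp.
Proof. by move=> u v t Ku Kv t0 t1 i; rewrite blkD !blkZ; apply: hvK. Qed.

Lemma Dset_convex : Defs.convex_set Dset.
Proof.
move=> u v t [z1 [D1 [D2 D3]] <-] [z2 [E1 [E2 E3]] <-] t0 t1.
exists (t *: z1.1 + (1 - t) *: z2.1,
        (t *: z1.2.1 + (1 - t) *: z2.2.1, t *: z1.2.2 + (1 - t) *: z2.2.2)).
  by split; [apply: Kp_convex | split; [apply: Kp_convex | apply: hvK]].
rewrite /L /= !scale_row_mx add_row_mx; congr row_mx.
  by apply/rowP => k; rewrite !mxE; ring.
apply/rowP => k; case/mxvec_indexP: k => i j; rewrite /pack !(mxE, mxvecE); ring.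
Qed.

Lemma Dset0 : Dset 0.
Proof.
exists (pack (fun _ => x), (pack (fun _ => x), x)).
  by split; [move=> i; rewrite blk_pack | split => // i; rewrite blk_pack].
by rewrite /L /= subrr row_mx0.
Qed.

Lemma Dinterior : nbhs (0 : 'rV[R]_(n * d + n * d)) Dset ->
  (d <= affdim [set y | forall i, K i y])%N.
Proof.
move=> /nbhs_ballP [e /= e0 He].
have inD : forall q, `|q| < e -> Dset q.
  by move=> q qe; apply: He; rewrite -ball_normE /= sub0r normrN.
have fd : forall i, exists c r, 0 < r /\ forall w, `|w - c| < r -> K i w.
  move=> i; apply: (full_of_diff (hvK i) e0) => u ue.
  pose q := row_mx (pack (fun l => if l == i then u else 0)) (0 : P).
  have : Dset q.
    apply: inD; apply: le_lt_trans ue; apply: norm_row_mx_le.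
      apply: norm_pack_le => // l; case: eqP => _; rewrite ?normr0 //.
    by rewrite normr0.
  case=> z [Dz1 [Dz2 Dz3]] /eq_row_mx [E1 _].
  exists (blk i z.1), (blk i z.2.1); split; [exact: Dz1 | exact: Dz2 |].
  by have := congr1 (blk i) E1; rewrite blkB blk_pack eqxx => <-.
have /choice [c Hc] := fd.
have /choice [rr Hr] := Hc.
pose r := \big[Num.min/1]_i rr i.
have r0 : 0 < r.
  by rewrite /r; elim/big_ind: _ => // [a b ha hb|i _]; [rewrite lt_min ha hb | case: (Hr i)].
have rle i : r <= rr i by rewrite /r (bigD1 i) //= ge_min lexx.
pose Mc := \sum_l `|c l|.
have Mc0 : 0 <= Mc by apply: sumr_ge0 => l _.
have cle l : `|c l| <= Mc.
  by rewrite /Mc (bigD1 l) //= lerDl sumr_ge0.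
pose eps := e / (Mc + 1).
have Mc1 : 0 < Mc + 1 by rewrite ltr_wpDl.
have eps0 : 0 < eps by rewrite divr_gt0.
pose q := row_mx (0 : P) (pack (fun l => (- eps) *: c l)).
have : Dset q.
  apply: inD; apply: (@le_lt_trans _ _ (eps * Mc)).
    apply: norm_row_mx_le; first by rewrite normr0 mulr_ge0 // ltW.
    apply: norm_pack_le => [|l]; first by rewrite mulr_ge0 // ltW.
    by rewrite normrZ normrN (gtr0_norm eps0) ler_wpM2l // ltW.
  by rewrite /eps mulrAC ltr_pdivrMr // ltr_pM2l // ltrDl.
case=> z [Dz1 [Dz2 Dz3]] /eq_row_mx [_ E2].
pose w := z.2.2.
have Ey l j : blk l z.1 0 j = w 0 j - eps * c l 0 j.
  have := congr1 (fun v : V => v 0 j) (congr1 (blk l) E2).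
  rewrite /= blkB !blk_pack !mxE mulNr => E; rewrite -/w in E; lra.
pose p0 := (1 + eps)^-1 *: w.
have e10 : 0 < 1 + eps by rewrite ltr_wpDr // ltW.
apply: (@ball_affdim _ _ _ p0 (eps / (1 + eps) * r)).
  by rewrite mulr_gt0 // divr_gt0.
move=> v hv i.
pose c' := c i + ((1 + eps) / eps) *: (v - p0).
have Kc' : K i c'.
  apply: (proj2 (Hr i)); rewrite /c' addrC addKr normrZ gtr0_norm; last by rewrite divr_gt0.
  apply: (@lt_le_trans _ _ r); last exact: rle.
  rewrite -ltr_pdivlMl ?divr_gt0 // invf_div; apply: lt_le_trans hv _.
  by rewrite mulrC.
have t0 : 0 <= (1 + eps)^-1 by rewrite invr_ge0 ltW.
have t1 : (1 + eps)^-1 <= 1 by rewrite invf_le1 // lerDl ltW.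
have := hvK i (blk i z.1) c' ((1 + eps)^-1) (Dz1 i) Kc' t0 t1.
suff -> : (1 + eps)^-1 *: blk i z.1 + (1 - (1 + eps)^-1) *: c' = v by [].
apply/rowP => j; have yE := Ey i j.
rewrite /c' /p0 !mxE.
rewrite !mxE in yE; rewrite yE; field.
by rewrite !gt_eqF.
Qed.

Lemma relation : (affdim [set y | forall i, K i y] < d)%N ->
  exists2 A : 'rV[R]_(n * d + n * d), A != 0 & forall z, Dom z -> ip A (L z) <= 0.
Proof.
move=> hdim.
have [|A A0 HA] := support Dset_compact Dset_convex Dset0.
  by move=> nb; have := Dinterior nb; rewrite leqNgt hdim.
by exists A => // z Dz; have := HA (L z) (ex_intro2 _ _ z Dz erefl); rewrite ip0r.
Qed.

Definition upd (l : 'I_n) (y : V) : P := pack (fun k => if k == l then y else x).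

Lemma blk_upd l y k : blk k (upd l y) = if k == l then y else x.
Proof. by rewrite blk_pack. Qed.

Lemma Kp_upd l y : K l y -> Kp (upd l y).
Proof. by move=> Ky k; rewrite blk_upd; case: eqP => [->|_]. Qed.

Lemma Kp_X : Kp (pack (fun _ => x)).
Proof. by move=> k; rewrite blk_pack. Qed.

Lemma main_succ : (affdim [set y | forall i, K i y] < d)%N ->
  (forall i, ~ nbhs x (K i)) ->
  exists H : 'I_n -> seq ('rV[R]_d * R),
    (forall i, H i != [::]) /\
    (forall i h, h \in H i -> supporting_halfspace (K i) x h) /\
    (affdim [set y | forall i h, h \in H i -> halfspace h y] < d)%N.
Proof.
move=> hdim hnb.
have [A A0 HA] := relation hdim.
pose al l := blk l (lsubmx A : P). pose be l := blk l (rsubmx A : P).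
have HA' : forall z, Dom z -> \sum_l (ip (al l) (blk l z.1 - blk l z.2.1) +
                                     ip (be l) (blk l z.1 - z.2.2)) <= 0.
  move=> z Dz; have := HA z Dz; rewrite -[A]hsubmxK /L ip_row_mx !ip_blk => h.
  rewrite big_split /=; apply: le_trans h; rewrite le_eqVlt; apply/orP; left; apply/eqP.
  by congr (_ + _); apply: eq_bigr => l _; rewrite blkB // blk_pack.
pose X := pack (fun _ : 'I_n => x).
have F1 l y : K l y -> ip (- al l) y <= ip (- al l) x.
  move=> Ky; have := HA' (X, (upd l y, x)) (conj Kp_X (conj (Kp_upd l y Ky) (hKx _))).
  rewrite (bigD1 l) //= big1 => [|k kl]; last first.
    by rewrite blk_upd (negPf kl) blk_pack !subrr !ip0r addr0.
  by rewrite blk_upd eqxx blk_pack subrr ip0r !addr0 ipBr !ipNl; lra.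
have F2 l y : K l y -> ip (al l + be l) y <= ip (al l + be l) x.
  move=> Ky; have := HA' (upd l y, (X, x)) (conj (Kp_upd l y Ky) (conj Kp_X (hKx _))).
  rewrite (bigD1 l) //= big1 => [|k kl]; last first.
    by rewrite blk_upd (negPf kl) blk_pack !subrr !ip0r addr0.
  by rewrite blk_upd eqxx blk_pack addr0 !ipBr !ipDl; lra.
have F3 y : K ord0 y -> ip (- \sum_l be l) y <= ip (- \sum_l be l) x.
  move=> Ky; have := HA' (X, (X, y)) (conj Kp_X (conj Kp_X Ky)).
  rewrite /= (eq_bigr (fun l => ip (be l) (x - y))) => [|l _]; last first.
    by rewrite blk_pack subrr ip0r add0r.
  by rewrite -ipSl !ipNl ipBr; lra.
have /choice [sv Hsv] : forall l, exists sv : V, sv != 0 /\ forall y, K l y -> ip sv y <= ip sv x.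
  move=> l; have [a a0 Ha] := support (hcK l) (hvK l) (hKx l) (hnb l).
  by exists a.
pose vecs l := [:: - al l; al l + be l] ++ (if l == ord0 then [:: - \sum_k be k] else [::]).
have Hvecs l v : v \in vecs l -> forall y, K l y -> ip v y <= ip v x.
  rewrite /vecs mem_cat !inE => /orP [/orP [/eqP -> | /eqP ->]|]; first exact: F1.
    exact: F2.
  case: eqP => [-> | _]; last by rewrite in_nil.
  by rewrite inE => /eqP ->; exact: F3.
pose H l := [seq (v, ip v x) | v <- vecs l & v != 0] ++ [:: (sv l, ip (sv l) x)].
exists H; split.
  by move=> l; rewrite /H -size_eq0 size_cat /= addn1.
split.
  move=> l h; rewrite /H mem_cat => /orP [/mapP [v] | ].
    rewrite mem_filter => /andP [v0 vv] ->; split => //; split.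
      by move=> y Ky; rewrite /halfspace /= dotpE; exact: Hvecs vv y Ky.
    by rewrite /= dotpE.
  rewrite inE => /eqP ->; split; first by case: (Hsv l).
  split; last by rewrite /= dotpE.
  by move=> y Ky; rewrite /halfspace /= dotpE; case: (Hsv l) => _; apply.
have [l [v [vv v0]]] : exists l v, v \in vecs l /\ v != 0.
  case: (eqVneq (lsubmx A : P) 0) => A1.
    case: (eqVneq (rsubmx A : P) 0) => A2.
      by move: A0; rewrite -[A]hsubmxK A1 A2 row_mx0 eqxx.
    have [l bl] : exists l, be l != 0.
      apply: contrapT => H0; move/eqP: A2; apply; apply: blk_inj => l; rewrite blk0.
      by apply/eqP/negPn/negP => bl; apply: H0; exists l.
    exists l, (al l + be l); split; first by rewrite /vecs mem_cat !inE eqxx orbT.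
    by rewrite /al A1 blk0 add0r.
  have [l bl] : exists l, al l != 0.
    apply: contrapT => H0; move/eqP: A1; apply; apply: blk_inj => l; rewrite blk0.
    by apply/eqP/negPn/negP => bl; apply: H0; exists l.
  exists l, (- al l); split; first by rewrite /vecs mem_cat !inE eqxx.
  by rewrite oppr_eq0.
apply: (hyper_affdim (a := v) (b0 := ip v x)) => // y Qy.
have hv k u : u \in vecs k -> ip u (y - x) <= 0.
  move=> uk; case: (eqVneq u 0) => [-> | u0]; first by rewrite ip0l.
  have : (u, ip u x) \in H k by rewrite /H mem_cat map_f // mem_filter u0 uk.
  by move=> /(Qy k); rewrite /halfspace /= dotpE ipBr; lra.
pose t k := ip (- al k) (y - x). pose u k := ip (al k + be k) (y - x).
pose w := ip (- \sum_k be k) (y - x).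
have ht k : t k <= 0 by apply: (hv k); rewrite /vecs mem_cat !inE eqxx.
have hu k : u k <= 0 by apply: (hv k); rewrite /vecs mem_cat !inE eqxx orbT.
have hw : w <= 0 by apply: (hv ord0); rewrite /vecs mem_cat !inE eqxx orbT.
have tu k : t k + u k = ip (be k) (y - x) by rewrite /t /u ipNl ipDl; ring.
have hsum : \sum_k (t k + u k) + w = 0.
  by rewrite (eq_bigr _ (fun k _ => tu k)) -ipSl /w ipNl subrr.
have s0 : \sum_k - (t k + u k) = 0.
  apply/eqP; rewrite eq_le; apply/andP; split; last by apply: sumr_ge0 => k _; rewrite oppr_ge0; have h1 := ht k; have h2 := hu k; lra.
  by rewrite sumrN; lra.
have each k : t k + u k = 0.
  have := s0; move/eqP; rewrite psumr_eq0 => [/allP /(_ k (mem_index_enum k))|k' _]; last first.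
    by rewrite oppr_ge0; have h1 := ht k'; have h2 := hu k'; lra.
  by rewrite oppr_eq0 => /eqP.
move: vv; rewrite /vecs mem_cat !inE => /orP [/orP [/eqP -> | /eqP ->]|].
- have := each l; have := ht l; have := hu l; rewrite /t ipBr => *; lra.
- have := each l; have := ht l; have := hu l; rewrite /u ipBr => *; lra.
- case: eqP => [_ | _]; last by rewrite in_nil.
  by rewrite inE => /eqP ->; move: hsum; rewrite (eq_bigr _ (fun k _ => each k)) big1_eq add0r /w ipBr => *; lra.
Qed.

End Main.

Theorem theorem2p19 (R : realType) (d n : nat) (K : 'I_n -> set 'rV[R]_d)
    (x : 'rV[R]_d) :
  (forall i, convex_body (K i)) ->
  (affdim [set y | forall i, K i y] < d)%N ->
  [set y | forall i, K i y] x ->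
  (forall i, boundary (K i) x) ->
  exists H : 'I_n -> seq ('rV[R]_d * R),
    (forall i, H i != [::]) /\
    (forall i h, h \in H i -> supporting_halfspace (K i) x h) /\
    (affdim [set y | forall i h, h \in H i -> halfspace h y] < d)%N.
Proof.
move=> hK hdim hx hbd.
case: n K hK hdim hx hbd => [|m] K hK hdim hx hbd.
  exfalso; move: hdim; rewrite ltnNge => /negP; apply.
  by apply: (@ball_affdim R d _ 0 1) => // w _ [].
apply: main_succ => // [i|i|i].
- by case: (hK i) => _ [].
- by case: (hK i) => _ [].
- by case: (hbd i).
Qed.
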